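(* Let $f : \{0, 1\}^n \to \{0, 1\}$ be a Boolean function. Then $\mathsf{D}_{\mathrm{cc}}^\rightarrow(f \circ \mathsf{AND}) = \lceil\log(\mathsf{Pat}^{\mathsf{M}}(f))\rceil$.
   Context: Every $f:\{0,1\}^n\to\{0,1\}$ has a unique M\''obius expansion $f=\sum_{S\subseteq[n]}\widetilde f(S)\mathsf{AND}_S$ with real coefficients, where $\mathsf{AND}_S(x)=\prod_{i\in S}x_i$; its M\''obius support is $\mathcal{S}_f=\{S:\widetilde f(S)\ne0\}$. The pattern of $x\in\{0,1\}^n$ is the vector $(\mathsf{AND}_S(x))_{S\in\mathcal S_f}\in\{0,1\}^{\mathcal S_f}$, and the M\''obius pattern complexity $\mathsf{Pat}^{\mathsf{M}}(f)$ is the number of distinct patterns over all $x\in\{0,1\}^n$. $f\circ\mathsf{AND}$ is the two-party function $(x,y)\mapsto f(x_1\wedge y_1,\dots,x_n\wedge y_n)$ (Alice holds $x$, Bob $y$); $\mathsf{D}_{\mathrm{cc}}^\rightarrow$ is deterministic one-way communication complexity. Logarithms are base 2. *)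

(* Defs.v *)
From mathcomp Require Import all_boot all_algebra.
Set Implicit Arguments. Unset Strict Implicit. Unset Printing Implicit Defensive.
Import GRing.Theory.
Local Open Scope ring_scope.

Definition ANDS (n : nat) (S : {set 'I_n}) (x : n.-tuple bool) : bool :=
  [forall i in S, tnth x i].

Definition indic (n : nat) (T : {set 'I_n}) : n.-tuple bool :=
  [tuple i \in T | i < n].

(* Moebius coefficient: the unique coefficients of f = sum_S c(S) AND_S,
   given by Moebius inversion  c(S) = sum_{T subset S} (-1)^{|S|-|T|} f(1_T).
   (They are integers; computed in int, so the support is the same as over R.) *)
Definition mobius (n : nat) (f : n.-tuple bool -> bool) (S : {set 'I_n}) : int :=
  \sum_(T : {set 'I_n} | T \subset S)
     (-1) ^+ (#|S| - #|T|)%N * (f (indic T))%:R.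

(* Pattern of x: (AND_S(x))_{S in supp f}, encoded as a function on all sets,
   forced to false outside the Moebius support. *)
Definition pattern (n : nat) (f : n.-tuple bool -> bool) (x : n.-tuple bool)
  : {ffun {set 'I_n} -> bool} :=
  [ffun S => (mobius f S != 0) && ANDS S x].

Definition PatM (n : nat) (f : n.-tuple bool -> bool) : nat :=
  #|[set pattern f x | x : n.-tuple bool]|.

Definition compAND (n : nat) (f : n.-tuple bool -> bool)
  (x y : n.-tuple bool) : bool :=
  f [tuple tnth x i && tnth y i | i < n].

Definition oneway_protocol (n : nat) (F : n.-tuple bool -> n.-tuple bool -> bool)
  (c : nat) : bool :=
  [exists A : {ffun n.-tuple bool -> c.-tuple bool},
   exists B : {ffun (c.-tuple bool * n.-tuple bool) -> bool},
   [forall x, forall y, B (A x, y) == F x y]].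

Lemma oneway_protocol_exists (n : nat) (F : n.-tuple bool -> n.-tuple bool -> bool) :
  exists c, oneway_protocol F c.
Proof.
exists n; apply/existsP; exists [ffun x => x]; apply/existsP.
exists [ffun p => F p.1 p.2]; apply/forallP => x; apply/forallP => y.
by rewrite !ffunE.
Qed.

Definition Dcc_oneway (n : nat) (F : n.-tuple bool -> n.-tuple bool -> bool) : nat :=
  ex_minn (oneway_protocol_exists F).

Definition ceil_log2 (m : nat) : nat := up_log 2 m.

(* Main.v *)
Require Import Defs.
From mathcomp Require Import all_boot all_algebra.
From mathcomp Require Import zify ring.
Set Implicit Arguments. Unset Strict Implicit. Unset Printing Implicit Defensive.
Import GRing.Theory.

Section M.
Local Open Scope ring_scope.
Variable n : nat.
Implicit Types S T Z Y : {set 'I_n}.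

Definition ones (z : n.-tuple bool) : {set 'I_n} := [set i | tnth z i].

Lemma ANDS_sub S z : ANDS S z = (S \subset ones z).
Proof.
apply/forall_inP/subsetP => H i /H; by rewrite inE.
Qed.

Lemma indic_ones z : indic (ones z) = z.
Proof. by apply: eq_from_tnth => i; rewrite tnth_mktuple inE. Qed.

Lemma ANDS_indic S Y : ANDS S (indic Y) = (S \subset Y).
Proof.
apply/forall_inP/subsetP => H i /H; by rewrite tnth_mktuple.
Qed.

Lemma sgn_sub (a b : nat) : (b <= a)%N ->
  (-1) ^+ (a - b) = (-1) ^+ a * (-1) ^+ b :> int.
Proof.
move=> ba.
have -> : ((-1) ^+ a = (-1) ^+ (a - b) * (-1) ^+ b :> int) by rewrite -exprD subnK.
by rewrite -mulrA -exprMn mulrNN mulr1 expr1n mulr1.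
Qed.

Lemma alt_sum T Z : T \subset Z ->
  \sum_(S : {set 'I_n} | (T \subset S) && (S \subset Z)) (-1) ^+ #|S| =
  (if T == Z then (-1) ^+ #|Z| else 0) :> int.
Proof.
move=> TZ; case: eqP => [<-|neTZ].
  rewrite (big_pred1 T) // => S /=; by rewrite eq_sym eqEsubset.
have : ~~ (Z \subset T) by apply: contra_notN neTZ => ZT; apply/eqP; rewrite eqEsubset TZ.
case/subsetPn => i iZ iT.
pose h S := if i \in S then S :\ i else i |: S.
have hK : involutive h.
  move=> S; rewrite /h; case iS: (i \in S).
    by rewrite setD11 setD1K.
  by rewrite setU11 setU1K ?iS.
set X := \sum_(S | _) _.
have : X = - X.
  rewrite {1}/X (reindex_inj (inv_inj hK)) /= -sumrN.
  apply: eq_big => S.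
    rewrite /h; case: ifP => iS.
      congr andb.
        apply/idP/idP => H; first by apply: subset_trans H (subD1set _ _).
        by apply/subsetP => j jT; rewrite !inE (subsetP H _ jT) andbT; apply: contraNneq iT => <-.
      apply/idP/idP => H; last by apply: subset_trans (subD1set _ _) H.
      by rewrite -(setD1K iS) subUset sub1set iZ H.
    congr andb.
      apply/idP/idP => H; last by apply: subset_trans H (subsetUr _ _).
      apply/subsetP => j jT; have := subsetP H _ jT; rewrite !inE.
      by case/orP => // /eqP ji; rewrite -ji jT in iT.
    by rewrite subUset sub1set iZ.
  move=> _; rewrite /h; case: ifP => iS.
    by rewrite [in RHS](cardsD1 i S) iS add1n exprS mulN1r opprK.
  by rewrite cardsU1 iS add1n exprS mulN1r.
move=> HX; lia.
Qed.

Variable f : n.-tuple bool -> bool.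

Lemma mobius_expand z :
  ((f z)%:R : int) = \sum_S mobius f S * (ANDS S z)%:R.
Proof.
set Z := ones z.
transitivity (\sum_(S : {set 'I_n} | S \subset Z) mobius f S); last first.
  rewrite big_mkcond; apply: eq_bigr => S _; rewrite ANDS_sub.
  by case: ifP => _; rewrite ?mulr1 ?mulr0.
rewrite /mobius.
under eq_bigr => S SZ do under eq_bigr => T TS do rewrite (sgn_sub (subset_leq_card TS)) -mulrA.
rewrite (exchange_big_dep (fun T => T \subset Z)) /=; last by move=> S T SZ TS; apply: subset_trans TS SZ.
under eq_bigr => T TZ do rewrite -big_distrl /= (eq_bigl _ _ (fun S => andbC _ _)) alt_sum //.
rewrite (bigD1 Z) //= eqxx big1; last by move=> T /andP[_ /negbTE ->]; rewrite mul0r.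
by rewrite addr0 mulrA -exprMn mulrNN mulr1 expr1n mul1r /Z indic_ones.
Qed.

Lemma mobius_unique (d : {set 'I_n} -> int) :
  (forall y, \sum_S d S * (ANDS S y)%:R = 0) -> forall S, d S = 0.
Proof.
move=> H S; have [m Sm] := ubnP #|S|; elim: m S Sm => // m IH S Sm.
have := H (indic S).
rewrite (bigD1 S) //= ANDS_indic subxx mulr1 big1 ?addr0 // => U neUS.
rewrite ANDS_indic; case US: (U \subset S); last by rewrite mulr0.
rewrite IH ?mul0r //.
have : U \proper S by rewrite properEneq neUS US.
move/proper_card => lt; lia.
Qed.


Definition and2 (x y : n.-tuple bool) : n.-tuple bool :=
  [tuple tnth x i && tnth y i | i < n].

Lemma ANDS_and2 S x y : ANDS S (and2 x y) = ANDS S x && ANDS S y.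
Proof.
rewrite !ANDS_sub -subsetI (_ : ones (and2 x y) = ones x :&: ones y) //.
apply/setP => i.
by rewrite !inE tnth_mktuple.
Qed.

Lemma natr_bool_inj (a b : bool) : (a%:R : int) = b%:R -> a = b.
Proof. by case: a; case: b. Qed.

Lemma row_eq x x' : pattern f x = pattern f x' ->
  forall y, compAND f x y = compAND f x' y.
Proof.
move=> Hp y; apply: natr_bool_inj; rewrite /compAND -/(and2 x y) -/(and2 x' y).
rewrite !mobius_expand; apply: eq_bigr => S _; rewrite !ANDS_and2.
have := congr1 (fun g : {ffun {set 'I_n} -> bool} => g S) Hp; rewrite /= !ffunE.
case: (mobius f S =P 0) => [->|_] /= E; first by rewrite !mul0r.
by rewrite E.
Qed.

Lemma eq_row x x' : (forall y, compAND f x y = compAND f x' y) ->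
  pattern f x = pattern f x'.
Proof.
move=> Hr.
pose d S := mobius f S * ((ANDS S x)%:R - (ANDS S x')%:R).
have Hd : forall y, \sum_S d S * (ANDS S y)%:R = 0.
  move=> y; have := Hr y; rewrite /compAND -/(and2 x y) -/(and2 x' y) => E.
  have : ((f (and2 x y))%:R : int) - (f (and2 x' y))%:R = 0 by rewrite E subrr.
  rewrite !mobius_expand -sumrB => H0; rewrite -[in RHS]H0; apply: eq_bigr => S _.
  rewrite /d !ANDS_and2.
  by case: (ANDS S x); case: (ANDS S x'); case: (ANDS S y); rewrite /=; ring.
apply/ffunP => S; rewrite !ffunE.
case cS: (mobius f S != 0) => //=.
have := mobius_unique Hd S; rewrite /d => /eqP; rewrite mulf_eq0 (negbTE cS) /=.
by case: (ANDS S x); case: (ANDS S x').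
Qed.

Definition Pset := [set pattern f x | x : n.-tuple bool].

Lemma proto_le c : oneway_protocol (compAND f) c -> (#|Pset| <= 2 ^ c)%N.
Proof.
case/existsP => A /existsP [B /forallP H].
have eqA : forall x x', A x = A x' -> pattern f x = pattern f x'.
  move=> x x' E; apply: eq_row => y.
  by rewrite -(eqP (forallP (H x) y)) -(eqP (forallP (H x') y)) E.
pose h m := if [pick x | A x == m] is Some x then pattern f x else [ffun _ => false].
have hA : forall x, h (A x) = pattern f x.
  move=> x; rewrite /h; case: pickP => [x' /eqP|/(_ x)]; last by rewrite eqxx.
  exact: eqA.
have : Pset \subset h @: [set: c.-tuple bool].
  apply/subsetP => p /imsetP [x _ ->]; apply/imsetP; exists (A x); by rewrite ?inE // hA.
move/subset_leq_card => le; apply: leq_trans le _; apply: leq_trans (leq_imset_card _ _) _.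
by rewrite cardsT card_tuple card_bool.
Qed.

Lemma proto_ge c : (#|Pset| <= 2 ^ c)%N -> oneway_protocol (compAND f) c.
Proof.
move=> le.
pose e := enum {: c.-tuple bool}.
have se : size e = (2 ^ c)%N by rewrite /e -cardE card_tuple card_bool.
pose d0 : c.-tuple bool := [tuple false | i < c].
pose A := [ffun x => nth d0 e (index (pattern f x) (enum Pset))].
have inP : forall x, pattern f x \in enum Pset.
  by move=> x; rewrite mem_enum; apply: imset_f.
have idx : forall x, (index (pattern f x) (enum Pset) < size e)%N.
  move=> x; rewrite se; apply: leq_trans le; rewrite cardE index_mem; exact: inP.
have injA : forall x x', A x = A x' -> pattern f x = pattern f x'.
  move=> x x'; rewrite !ffunE => /eqP; rewrite nth_uniq ?enum_uniq // => /eqP.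
  by move=> E; apply: (@index_inj _ (pattern f x) _ _ _ (inP x) (inP x') E).
apply/existsP; exists A; apply/existsP.
exists [ffun p => [exists x, (A x == p.1) && compAND f x p.2]].
apply/forallP => x; apply/forallP => y; rewrite ffunE /=.
apply/eqP; apply/existsP/idP => [[x' /andP[/eqP Ax' Fx']]| Fx]; last by exists x; rewrite eqxx.
by rewrite -(row_eq (injA _ _ Ax')).
Qed.

End M.

Theorem claim4p1 (n : nat) (f : n.-tuple bool -> bool) :
  Dcc_oneway (compAND f) = ceil_log2 (PatM f).
Proof.
rewrite /Dcc_oneway /ceil_log2 /PatM -/(Pset f).
case: ex_minnP => m Hm Hmin.
apply/eqP; rewrite eqn_leq; apply/andP; split.
  by apply: Hmin; apply: proto_ge; apply: up_logP.
by apply: up_log_min => //; apply: proto_le.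
Qed.
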